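(* Let $X=-x\,f'(y)\frac{\partial}{\partial x}+f(y)\frac{\partial}{\partial y}$ be (the germ at the origin of) a smooth vector field on $\mathbb{R}^2$ with $f$ smooth, and suppose $X(0,0)=0$, i.e. $f(0)=0$. Then the eigenvalues of the linearization $DX(0,0)$ are $-f'(0)$ and $f'(0)$; hence the origin is a hyperbolic singularity of $X$ if and only if $f'(0)\neq 0$. In that case, with $a=f'(0)$, there is a germ at the origin of a smooth diffeomorphism $\psi$ of $(\mathbb{R}^2,0)$ with $\psi^*(x\,dy)=x\,dy$ and $$\psi_*X=-ax\frac{\partial}{\partial x}+ay\frac{\partial}{\partial y}$$ near the origin.
   Context: Coordinates $(x,y)$ on $\mathbb{R}^2$; $x\,dy$ is the Liouville form. The vector fields of this form are exactly the smooth vector fields preserving $x\,dy$. A zero $p$ of a vector field is hyperbolic if $DX(p)$ has no eigenvalue with zero real part. $\psi_*$ denotes pushforward of vector fields and $\psi^*$ pullback of forms. ''Smooth'' means $C^\infty$. *)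

(* Defs.v *)
From Stdlib Require Import Reals.
Open Scope R_scope.

Definition R2 := (R * R)%type.
Definition origin : R2 := (0, 0).

Definition has_pdx (g : R2 -> R) (p : R2) (l : R) : Prop :=
  derivable_pt_lim (fun t => g (t, snd p)) (fst p) l.
Definition has_pdy (g : R2 -> R) (p : R2) (l : R) : Prop :=
  derivable_pt_lim (fun t => g (fst p, t)) (snd p) l.

Definition open2 (U : R2 -> Prop) : Prop :=
  forall p, U p -> exists eps, 0 < eps /\
    forall q, Rabs (fst q - fst p) < eps -> Rabs (snd q - snd p) < eps -> U q.

Definition cont2_on (U : R2 -> Prop) (g : R2 -> R) : Prop :=
  forall p, U p -> forall eps, 0 < eps -> exists del, 0 < del /\
    forall q, U q -> Rabs (fst q - fst p) < del -> Rabs (snd q - snd p) < del ->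
      Rabs (g q - g p) < eps.

Definition smooth2_on (U : R2 -> Prop) (g : R2 -> R) : Prop :=
  exists D : nat -> nat -> R2 -> R,
    (forall p, U p -> D 0%nat 0%nat p = g p) /\
    forall i j, cont2_on U (D i j) /\
      forall p, U p -> has_pdx (D i j) p (D (S i) j p) /\
                       has_pdy (D i j) p (D i (S j) p).

Definition smooth_map_on (U : R2 -> Prop) (F : R2 -> R2) : Prop :=
  smooth2_on U (fun p => fst (F p)) /\ smooth2_on U (fun p => snd (F p)).

Definition smooth1 (f : R -> R) : Prop :=
  exists D : nat -> R -> R, (forall x, D 0%nat x = f x) /\
    forall n x, derivable_pt_lim (D n) x (D (S n) x).

Record Mat2 := mkMat2 { m11 : R; m12 : R; m21 : R; m22 : R }.

Definition is_jacobian (F : R2 -> R2) (p : R2) (M : Mat2) : Prop :=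
  has_pdx (fun q => fst (F q)) p (m11 M) /\ has_pdy (fun q => fst (F q)) p (m12 M) /\
  has_pdx (fun q => snd (F q)) p (m21 M) /\ has_pdy (fun q => snd (F q)) p (m22 M).

Definition mat_apply (M : Mat2) (v : R2) : R2 :=
  (m11 M * fst v + m12 M * snd v, m21 M * fst v + m22 M * snd v).

(** Complex numbers as pairs (re, im), and complex eigenvalues of a real
    2x2 matrix: lam is an eigenvalue iff M v = lam v for some nonzero v in C^2. *)
Definition C := (R * R)%type.
Definition Cre (z : C) := fst z.
Definition Cadd (z w : C) : C := (fst z + fst w, snd z + snd w).
Definition Cmul (z w : C) : C :=
  (fst z * fst w - snd z * snd w, fst z * snd w + snd z * fst w).
Definition RtoC (r : R) : C := (r, 0).

Definition eigenvalue (M : Mat2) (lam : C) : Prop :=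
  exists v1 v2 : C, (v1 <> (0,0) \/ v2 <> (0,0)) /\
    Cadd (Cmul (RtoC (m11 M)) v1) (Cmul (RtoC (m12 M)) v2) = Cmul lam v1 /\
    Cadd (Cmul (RtoC (m21 M)) v1) (Cmul (RtoC (m22 M)) v2) = Cmul lam v2.

Definition hyperbolic_zero (X : R2 -> R2) (p : R2) : Prop :=
  X p = (0, 0) /\
  exists M, is_jacobian X p M /\ forall lam, eigenvalue M lam -> Cre lam <> 0.

Definition diffeo_germ (U : R2 -> Prop) (psi : R2 -> R2) : Prop :=
  open2 U /\ U origin /\ psi origin = origin /\ smooth_map_on U psi /\
  exists (V : R2 -> Prop) (phi : R2 -> R2),
    open2 V /\ smooth_map_on V phi /\
    (forall p, U p -> V (psi p) /\ phi (psi p) = p) /\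
    (forall q, V q -> U (phi q) /\ psi (phi q) = q).

(** psi^*(x dy) = x dy on U: psi^*(x dy) = psi_1 d(psi_2)
    = psi_1 (d_x psi_2) dx + psi_1 (d_y psi_2) dy. *)
Definition preserves_liouville_on (U : R2 -> Prop) (psi : R2 -> R2) : Prop :=
  forall p, U p -> forall c d,
    has_pdx (fun q => snd (psi q)) p c -> has_pdy (fun q => snd (psi q)) p d ->
    fst (psi p) * c = 0 /\ fst (psi p) * d = fst p.

(** (psi_* X)(psi p) = D psi(p) X(p) equals Y(psi p) for all p in U. *)
Definition pushforward_eq_on (U : R2 -> Prop) (psi X Y : R2 -> R2) : Prop :=
  forall p, U p -> forall J, is_jacobian psi p J -> mat_apply J (X p) = Y (psi p).

(* Main.v *)
Require Import Defs.
From Stdlib Require Import Reals Lra ClassicalEpsilon FunctionalExtensionality Ranalysis5.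
From Coquelicot Require Import Coquelicot.
Open Scope R_scope.

Definition openR (I : R -> Prop) := forall x, I x -> exists e, 0 < e /\ forall y, Rabs (y - x) < e -> I y.

Fixpoint Cn (I : R -> Prop) (n : nat) (f : R -> R) : Prop :=
  match n with O => True
  | S m => exists f', (forall x, I x -> derivable_pt_lim f x (f' x)) /\ Cn I m f' end.
Definition Sm I f := forall n, Cn I n f.

Lemma dlim_eq f x l l' : derivable_pt_lim f x l -> l = l' -> derivable_pt_lim f x l'.
Proof. intros H ->; exact H. Qed.

Lemma dlim_ext_on I f g x l : openR I -> (forall y, I y -> f y = g y) -> I x ->
  derivable_pt_lim f x l -> derivable_pt_lim g x l.
Proof.
  intros HI Hfg Hx Hd. destruct (HI x Hx) as [e [He HIe]].
  apply (derivable_pt_lim_locally_ext f g x (x - e) (x + e)); [lra|..|exact Hd].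
  intros z Hz; apply Hfg, HIe; apply Rabs_def1; lra.
Qed.

Lemma Cn_ext I n : openR I -> forall f g, (forall y, I y -> f y = g y) -> Cn I n f -> Cn I n g.
Proof.
  intros HI; destruct n as [|n]; [simpl; auto|].
  intros f g Hfg [f' [Hd Hc]]. exists f'; split; auto.
  intros x Hx; apply (dlim_ext_on I f g); auto.
Qed.

Lemma Cn_S I n : forall f, Cn I (S n) f -> Cn I n f.
Proof.
  induction n as [|n IH]; simpl; auto.
  intros f [f' [Hd Hc]]. exists f'; split; auto.
Qed.

Lemma Cn_le I n m f : (m <= n)%nat -> Cn I n f -> Cn I m f.
Proof. induction 1; auto. intros H0; apply IHle, Cn_S, H0. Qed.

Lemma Cn_sub (I I2 : R -> Prop) n : (forall x, I2 x -> I x) -> forall f, Cn I n f -> Cn I2 n f.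
Proof.
  intros Hs; induction n as [|n IH]; simpl; auto.
  intros f [f' [Hd Hc]]; exists f'; split; auto.
Qed.

Lemma Cn_const I n c : Cn I n (fun _ => c).
Proof.
  revert c; induction n as [|n IH]; simpl; auto. intros c.
  exists (fun _ => 0); split; auto. intros; apply derivable_pt_lim_const.
Qed.

Lemma Cn_id I n : Cn I n (fun x => x).
Proof.
  destruct n; simpl; auto. exists (fun _ => 1); split.
  intros; apply derivable_pt_lim_id. apply Cn_const.
Qed.

Lemma Cn_plus I n : forall f g, Cn I n f -> Cn I n g -> Cn I n (fun x => f x + g x).
Proof.
  induction n as [|n IH]; simpl; auto.
  intros f g [f' [Hf Cf]] [g' [Hg Cg]]. exists (fun x => f' x + g' x); split; auto.
  intros x Hx. apply (derivable_pt_lim_plus f g x _ _ (Hf x Hx) (Hg x Hx)).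
Qed.

Lemma Cn_opp I n : forall f, Cn I n f -> Cn I n (fun x => - f x).
Proof.
  induction n as [|n IH]; simpl; auto.
  intros f [f' [Hf Cf]]. exists (fun x => - f' x); split; auto.
  intros x Hx. apply (derivable_pt_lim_opp f x _ (Hf x Hx)).
Qed.

Lemma Cn_mult I n : forall f g, Cn I n f -> Cn I n g -> Cn I n (fun x => f x * g x).
Proof.
  induction n as [|n IH]; simpl; auto.
  intros f g Hf0 Hg0.
  assert (Cf0 := Cn_S I n f Hf0). assert (Cg0 := Cn_S I n g Hg0).
  destruct Hf0 as [f' [Hf Cf]]. destruct Hg0 as [g' [Hg Cg]].
  exists (fun x => f' x * g x + f x * g' x); split.
  - intros x Hx. apply (derivable_pt_lim_mult f g x _ _ (Hf x Hx) (Hg x Hx)).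
  - apply Cn_plus; apply IH; auto.
Qed.

Lemma Cn_comp (I1 I2 : R -> Prop) n : forall f G, Cn I1 n f -> Cn I2 n G ->
  (forall y, I2 y -> I1 (G y)) -> Cn I2 n (fun y => f (G y)).
Proof.
  induction n as [|n IH]; simpl; auto.
  intros f G Hf0 HG0 HIG.
  assert (CG0 := Cn_S I2 n G HG0).
  destruct Hf0 as [f' [Hf Cf]]. destruct HG0 as [G' [HG CG]].
  exists (fun y => f' (G y) * G' y); split.
  - intros y Hy. apply (derivable_pt_lim_comp G f y _ _ (HG y Hy) (Hf _ (HIG y Hy))).
  - apply Cn_mult; auto.
Qed.

Lemma Cn_Rinv n : Cn (fun x => x <> 0) n Rinv.
Proof.
  induction n as [|n IH]; simpl; auto.
  exists (fun x => - (/ x * / x)); split.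
  - intros x Hx. apply dlim_eq with (- 1 / x ^ 2); [|field; auto].
    apply is_derive_Reals.
    apply (is_derive_inv (fun y => y) x 1); [apply is_derive_Reals, derivable_pt_lim_id|exact Hx].
  - apply Cn_opp, Cn_mult; auto.
Qed.

Lemma Cn_exp I n : Cn I n exp.
Proof.
  induction n as [|n IH]; simpl; auto.
  exists exp; split; auto. intros; apply derivable_pt_lim_exp.
Qed.

Lemma Cn_inv I n f : Cn I n f -> (forall x, I x -> f x <> 0) -> Cn I n (fun x => / f x).
Proof.
  intros Hf Hn. apply (Cn_comp (fun x => x <> 0) I n Rinv f); auto. apply Cn_Rinv.
Qed.

Definition Der (f : R -> R) (y : R) : R := epsilon (inhabits 0) (fun l => derivable_pt_lim f y l).

Lemma Der_spec I f : openR I -> Sm I f -> Sm I (Der f) /\ forall y, I y -> derivable_pt_lim f y (Der f y).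
Proof.
  intros HI Hf.
  assert (Hd : forall y, I y -> derivable_pt_lim f y (Der f y)).
  { intros y Hy. destruct (Hf 1%nat) as [f' [H1 _]].
    unfold Der; apply epsilon_spec. exists (f' y); auto. }
  split; auto. intros n. destruct (Hf (S n)) as [f' [H1 H2]].
  apply (Cn_ext I n HI f'); auto.
  intros y Hy; apply (uniqueness_limite f y); auto.
Qed.

Lemma Sm_tower I f : openR I -> Sm I f -> exists D : nat -> R -> R,
  (forall y, D O y = f y) /\ (forall n, Sm I (D n)) /\
  forall n y, I y -> derivable_pt_lim (D n) y (D (S n) y).
Proof.
  intros HI Hf. exists (fun n => Nat.iter n Der f).
  assert (HS : forall n, Sm I (Nat.iter n Der f)).
  { induction n as [|n IH]; simpl; auto. apply (Der_spec I); auto. }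
  split; [reflexivity|split; auto].
  intros n y Hy. simpl. apply (Der_spec I); auto.
Qed.

Lemma tower_Sm I (D : nat -> R -> R) : openR I ->
  (forall n y, I y -> derivable_pt_lim (D n) y (D (S n) y)) -> forall k, Sm I (D k).
Proof.
  intros HI HD k n. revert k. induction n as [|n IH]; simpl; auto.
  intros k. exists (D (S k)); split; auto.
Qed.
Lemma dlim_lin_comp g l t c u : derivable_pt_lim g (t*u) l ->
  derivable_pt_lim (fun z => c * g (t*z)) u (c * (t * l)).
Proof.
  intros H.
  assert (H1 : derivable_pt_lim (fun z => t * z) u t).
  { apply dlim_eq with (t * 1); [|ring]. apply (derivable_pt_lim_scal id); apply derivable_pt_lim_id. }
  assert (H2 := derivable_pt_lim_comp _ _ _ _ _ H1 H).
  apply dlim_eq with (c * (l * t)); [|ring].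
  apply (derivable_pt_lim_scal (fun z => g (t*z))). exact H2.
Qed.

Lemma cont_of_dlim f x l : derivable_pt_lim f x l -> continuity_pt f x.
Proof. intros H. apply derivable_continuous_pt. exists l; exact H. Qed.

Lemma division (D : nat -> R -> R) : (forall n x, derivable_pt_lim (D n) x (D (S n) x)) -> D O 0 = 0 ->
 exists E : nat -> R -> R, (forall n x, derivable_pt_lim (E n) x (E (S n) x)) /\
   (forall x, x * E O x = D O x) /\ E O 0 = D 1%nat 0.
Proof.
  intros HD HD0.
  assert (HC : forall k x, continuity_pt (D k) x) by (intros; eapply cont_of_dlim; apply HD).
  assert (Hc2 : forall k m u t, continuity_2d_pt (fun u v => v ^ m * D k (v * u)) u t).
  { intros k m u t. apply continuity_2d_pt_mult.
    - apply (continuity_1d_2d_pt_comp (fun v => v ^ m) (fun _ v => v)).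
      apply derivable_continuous_pt, derivable_pt_pow. apply continuity_2d_pt_id2.
    - apply (continuity_1d_2d_pt_comp (D k) (fun u v => v * u)); [apply HC|].
      apply continuity_2d_pt_mult; [apply continuity_2d_pt_id2|apply continuity_2d_pt_id1]. }
  assert (Hint : forall k m u, ex_RInt (fun t => t ^ m * D k (t * u)) 0 1).
  { intros k m u. apply (@ex_RInt_continuous R_CompleteNormedModule). intros z _.
    apply continuity_pt_filterlim.
    apply continuity_pt_mult. apply derivable_continuous_pt, derivable_pt_pow.
    apply (continuity_pt_comp (fun t => t * u) (D k)); [|apply HC].
    apply continuity_pt_mult; [apply continuity_pt_id|apply continuity_pt_const; intros ? ?; reflexivity]. }
  exists (fun n x => RInt (fun t => t ^ n * D (S n) (t * x)) 0 1).
  split; [|split].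
  - intros n x. apply is_derive_Reals.
    assert (Hdu : forall u t, is_derive (fun z => t ^ n * D (S n) (t * z)) u (t ^ (S n) * D (S (S n)) (t * u))).
    { intros u t. apply is_derive_Reals. apply dlim_eq with (t ^ n * (t * D (S (S n)) (t * u))); [|simpl; ring].
      apply dlim_lin_comp, HD. }
    replace (RInt (fun t => t ^ S n * D (S (S n)) (t * x)) 0 1)
      with (RInt (fun t => Derive (fun u => t ^ n * D (S n) (t * u)) x) 0 1).
    + apply (is_derive_RInt_param (fun u t => t ^ n * D (S n) (t * u))).
      * apply filter_forall. intros y t _. eexists; apply Hdu.
      * intros t _. eapply continuity_2d_pt_ext; [|apply (Hc2 (S (S n)) (S n) x t)].
        intros u v. symmetry; apply is_derive_unique, Hdu.
      * apply filter_forall. intros y; apply Hint.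
    + apply RInt_ext. intros t _. apply is_derive_unique, Hdu.
  - intros x.
    assert (H : is_RInt (fun t => x * (t ^ 0 * D 1%nat (t * x))) 0 1 (minus (D O (1 * x)) (D O (0 * x)))).
    { apply (is_RInt_derive (fun t => D O (t * x))).
      - intros t _. apply is_derive_Reals. apply dlim_eq with (1 * (x * D 1%nat (t * x))); [|simpl; ring].
        apply (derivable_pt_lim_ext (fun z => 1 * D O (x * z))).
        { intros z; rewrite Rmult_1_l, Rmult_comm; reflexivity. }
        rewrite (Rmult_comm t x).
        apply (dlim_lin_comp (D O) _ x 1 t). apply HD.
      - intros t _. apply continuity_pt_filterlim.
        apply continuity_pt_mult; [apply continuity_pt_const; intros ? ?; reflexivity|].
        apply continuity_pt_mult; [apply continuity_pt_const; intros ? ?; reflexivity|].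
        apply (continuity_pt_comp (fun t => t * x) (D 1%nat)); [|apply HC].
        apply continuity_pt_mult; [apply continuity_pt_id|apply continuity_pt_const; intros ? ?; reflexivity]. }
    apply (@is_RInt_unique R_CompleteNormedModule) in H.
    assert (H2 := @RInt_scal R_CompleteNormedModule (fun t => t ^ 0 * D 1%nat (t * x)) 0 1 x (Hint _ _ _)).
    unfold scal in H2; simpl in H2. unfold mult in H2; simpl in H2.
    simpl in *. rewrite <- H2, H. unfold minus, plus, opp; simpl. rewrite Rmult_1_l, Rmult_0_l, HD0. ring.
  - simpl. rewrite (RInt_ext _ (fun _ => D 1%nat 0)).
    + rewrite RInt_const. unfold scal; simpl; unfold mult; simpl; ring.
    + intros t _. change (t ^ 0 * D 1%nat (t * 0) = D 1%nat 0). rewrite Rmult_0_r; ring.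
Qed.

Lemma cont2_of (U : R2 -> Prop) g : (forall p, U p -> continuity_2d_pt (fun u v => g (u,v)) (fst p) (snd p)) -> cont2_on U g.
Proof.
  intros H p Hp eps He. destruct (H p Hp (mkposreal eps He)) as [d Hd].
  exists d; split; [apply cond_pos|]. intros [u v] _ H1 H2. destruct p as [x y]. apply Hd; auto.
Qed.

Lemma dlim_const_on c x : derivable_pt_lim (fun _ => c) x 0.
Proof. apply derivable_pt_lim_const. Qed.

Lemma smooth2_y I m : openR I -> Sm I m -> smooth2_on (fun p => I (snd p)) (fun p => m (snd p)).
Proof.
  intros HI Hm. destruct (Sm_tower I m HI Hm) as [Dm [H0 [HS Hd]]].
  exists (fun i j p => match i with O => Dm j (snd p) | S _ => 0 end). split.
  - intros p _; apply H0.
  - intros i j; split.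
    + apply cont2_of. intros [x y] Hp; simpl in *. destruct i.
      * apply (continuity_1d_2d_pt_comp (Dm j) (fun _ v => v)); [|apply continuity_2d_pt_id2].
        eapply cont_of_dlim; apply Hd; auto.
      * apply continuity_2d_pt_const.
    + intros [x y] Hp; simpl in *. unfold has_pdx, has_pdy; simpl. destruct i; split; try apply dlim_const_on.
      apply Hd; auto.
Qed.

Lemma smooth2_xy I m : openR I -> Sm I m -> smooth2_on (fun p => I (snd p)) (fun p => fst p * m (snd p)).
Proof.
  intros HI Hm. destruct (Sm_tower I m HI Hm) as [Dm [H0 [HS Hd]]].
  exists (fun i j p => match i with O => fst p * Dm j (snd p) | 1%nat => Dm j (snd p) | _ => 0 end). split.
  - intros p _; rewrite H0; reflexivity.
  - intros i j; split.
    + apply cont2_of. intros [x y] Hp; simpl in *. destruct i as [|[|i]].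
      * apply continuity_2d_pt_mult; [apply continuity_2d_pt_id1|].
        apply (continuity_1d_2d_pt_comp (Dm j) (fun _ v => v)); [|apply continuity_2d_pt_id2].
        eapply cont_of_dlim; apply Hd; auto.
      * apply (continuity_1d_2d_pt_comp (Dm j) (fun _ v => v)); [|apply continuity_2d_pt_id2].
        eapply cont_of_dlim; apply Hd; auto.
      * apply continuity_2d_pt_const.
    + intros [x y] Hp; simpl in *. unfold has_pdx, has_pdy; simpl. destruct i as [|[|i]]; split; try apply dlim_const_on.
      * apply (derivable_pt_lim_ext (fun t => Dm j y * t)); [intros; ring|].
        apply dlim_eq with (Dm j y * 1); [|ring]. apply (derivable_pt_lim_scal id), derivable_pt_lim_id.
      * apply (derivable_pt_lim_scal (Dm j)). apply Hd; auto.
      * apply Hd; auto.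
Qed.

Lemma dl_inv f x l : derivable_pt_lim f x l -> f x <> 0 -> derivable_pt_lim (fun y => / f y) x (- l / (f x) ^ 2).
Proof. intros H Hn. apply is_derive_Reals. apply is_derive_inv; auto. apply is_derive_Reals; auto. Qed.

Lemma openR_int lo hi : openR (fun y => lo < y < hi).
Proof.
  intros x Hx. exists (Rmin (x - lo) (hi - x)). split.
  - apply Rmin_glb_lt; lra.
  - intros y Hy. apply Rabs_def2 in Hy. destruct Hy as [H1 H2].
    assert (Rmin (x - lo) (hi - x) <= x - lo) by apply Rmin_l.
    assert (Rmin (x - lo) (hi - x) <= hi - x) by apply Rmin_r. lra.
Qed.

Lemma open2_snd (I : R -> Prop) : openR I -> open2 (fun p => I (snd p)).
Proof.
  intros HI p Hp. destruct (HI _ Hp) as [e [He H]]. exists e; split; [exact He|].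
  intros q _ Hq. apply H; auto.
Qed.

Lemma Sm_sub (I I2 : R -> Prop) f : (forall x, I2 x -> I x) -> Sm I f -> Sm I2 f.
Proof. intros H Hf n. apply (Cn_sub I); auto. Qed.

Ltac cn := repeat first
  [ apply Cn_plus | apply Cn_mult | apply Cn_opp | apply Cn_const | apply Cn_id ].

Lemma cont_nonzero g a : continuity_pt g 0 -> g 0 = a -> a <> 0 ->
  exists r, 0 < r /\ forall y, Rabs y < r -> 0 < a * g y.
Proof.
  intros Hc Hg Ha.
  assert (Hpos : 0 < Rabs a / 2) by (apply Rabs_pos_lt in Ha; lra).
  destruct (Hc _ Hpos) as [r [Hr H]]. exists r; split; auto.
  intros y Hy.
  assert (Habs : Rabs (g y - a) < Rabs a / 2).
  { destruct (Req_dec y 0) as [->|Hy0]. rewrite Hg, Rminus_diag, Rabs_R0; lra.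
    assert (H1 : D_x no_cond 0 y /\ R_dist y 0 < r).
    { split. split; [exact I|auto]. unfold R_dist; rewrite Rminus_0_r; auto. }
    specialize (H y H1). simpl in H. unfold R_dist in H. rewrite Hg in H. exact H. }
  apply Rabs_def2 in Habs. destruct (Rle_or_lt 0 a).
  - rewrite Rabs_right in Habs by lra. nra.
  - rewrite Rabs_left in Habs by lra. nra.
Qed.

Lemma main_construct (f df : R -> R) (Df : nat -> R -> R) :
  (forall x, Df O x = f x) -> (forall n x, derivable_pt_lim (Df n) x (Df (S n) x)) ->
  (forall y, derivable_pt_lim f y (df y)) -> f 0 = 0 -> df 0 <> 0 ->
  let a := df 0 in exists (U : R2 -> Prop) (psi : R2 -> R2),
    diffeo_germ U psi /\ preserves_liouville_on U psi /\
    pushforward_eq_on U psi (fun p => (- fst p * df (snd p), f (snd p))) (fun q => (- a * fst q, a * snd q)).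
Proof.
  Ltac cn2 := repeat first
  [ match goal with H : Sm ?I ?f |- Cn ?I _ ?f => apply H end
  | match goal with H : forall k, Sm ?I (?F k) |- Cn ?I _ (?F _) => apply H end
  | apply Cn_plus | apply Cn_mult | apply Cn_opp | apply Cn_const | apply Cn_id ].
  intros HD0 HD Hdf Hf0 Ha a.
  destruct (division Df HD) as [Gt [HG [HGf HG0]]]. { rewrite HD0; exact Hf0. }
  assert (Hdfy : forall y, df y = Df 1%nat y).
  { intros y. apply (uniqueness_limite f y); auto. eapply derivable_pt_lim_ext; [|apply HD]. auto. }
  assert (HaG : Gt O 0 = a). { rewrite HG0; unfold a; rewrite Hdfy; reflexivity. }
  set (Ut := fun n => match n with O => fun x => a - Gt O x | S k => fun x => - Gt (S k) x end).
  assert (HU : forall n x, derivable_pt_lim (Ut n) x (Ut (S n) x)).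
  { intros [|n] x; simpl.
    - apply dlim_eq with (0 - Gt 1%nat x); [|ring].
      apply (derivable_pt_lim_minus (fun _ => a) (Gt O)); [apply derivable_pt_lim_const|apply HG].
    - apply (derivable_pt_lim_opp (Gt (S n))), HG. }
  destruct (division Ut HU) as [Wt [HW [HWu _]]]. { simpl; rewrite HaG; ring. }
  set (g := Gt O). set (g1 := Gt 1%nat). set (w := Wt O).
  assert (Hfy : forall y, f y = y * g y). { intros y; rewrite <- HD0, <- HGf; reflexivity. }
  assert (Hwy : forall y, y * w y = a - g y). { intros y; apply HWu. }
  assert (Hdfg : forall y, df y = g y + y * g1 y).
  { intros y. apply (uniqueness_limite f y); auto.
    apply (derivable_pt_lim_ext (fun y => y * g y)); [intros; rewrite Hfy; reflexivity|].
    apply dlim_eq with (1 * g y + y * g1 y); [|ring].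
    apply (derivable_pt_lim_mult id g); [apply derivable_pt_lim_id|apply HG]. }
  destruct (cont_nonzero g a) as [r [Hr Hag]]; auto.
  { eapply cont_of_dlim; apply HG. }
  set (J := fun y => - r < y < r).
  assert (HJo : openR J) by apply openR_int.
  assert (HJg : forall y, J y -> 0 < a * g y).
  { intros y Hy; apply Hag. unfold J in Hy; apply Rabs_def1; lra. }
  assert (Hgn : forall y, J y -> g y <> 0).
  { intros y Hy H. specialize (HJg y Hy). rewrite H in HJg. lra. }
  assert (SmG : forall k, Sm J (Gt k)).
  { intros k. apply (Sm_sub (fun _ => True)); auto. apply (tower_Sm (fun _ => True)); [intros x _; exists 1; split; [lra|auto]|intros n y _; apply HG]. }
  assert (SmW : forall k, Sm J (Wt k)).
  { intros k. apply (Sm_sub (fun _ => True)); auto. apply (tower_Sm (fun _ => True)); [intros x _; exists 1; split; [lra|auto]|intros n y _; apply HW]. }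
  set (q := fun y => w y * / g y).
  assert (Smq : Sm J q). { intros n. apply Cn_mult; [apply SmW|apply Cn_inv; auto; apply SmG]. }
  assert (Hqd : forall y, J y -> exists l, derivable_pt_lim q y l).
  { intros y Hy. destruct (Smq 1%nat) as [q' [Hq _]]. eauto. }
  assert (Hqc : forall y, J y -> continuity_pt q y).
  { intros y Hy. destruct (Hqd y Hy) as [l Hl]. eapply cont_of_dlim; eauto. }
  set (Q := fun y => RInt q 0 y).
  assert (HQ : forall y, J y -> derivable_pt_lim Q y (q y)).
  { intros y Hy. apply is_derive_Reals.
    apply (@is_derive_RInt R_CompleteNormedModule q Q 0 y).
    - destruct (HJo y Hy) as [e [He HJe]]. exists (mkposreal e He). intros b Hb.
      change (Rabs (b - y) < e) in Hb. apply (@RInt_correct R_CompleteNormedModule).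
      apply (@ex_RInt_continuous R_CompleteNormedModule). intros z Hz.
      apply continuity_pt_filterlim, Hqc.
      specialize (HJe b Hb). unfold J in *.
      assert (Rmin 0 b <= z <= Rmax 0 b) by exact Hz.
      destruct (Rle_or_lt 0 b).
      + rewrite Rmin_left, Rmax_right in H by lra. lra.
      + rewrite Rmin_right, Rmax_left in H by lra. lra.
    - apply continuity_pt_filterlim, Hqc; auto. }
  assert (SmQ : Sm J Q). { intros [|n]; simpl; auto. exists q; split; auto. }
  set (E := fun y => exp (Q y)).
  assert (HE : forall y, J y -> derivable_pt_lim E y (exp (Q y) * q y)).
  { intros y Hy. apply (derivable_pt_lim_comp Q exp); auto. apply derivable_pt_lim_exp. }
  assert (SmE : Sm J E). { intros n. unfold E. apply (Cn_comp (fun _ => True) J n exp Q); [apply Cn_exp|apply SmQ|auto]. }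
  assert (HEp : forall y, 0 < E y) by (intros; apply exp_pos).
  set (h := fun y => y * E y).
  set (hp := fun y => 1 * E y + y * (exp (Q y) * q y)).
  assert (Hh : forall y, J y -> derivable_pt_lim h y (hp y)).
  { intros y Hy. apply (derivable_pt_lim_mult id E); [apply derivable_pt_lim_id|auto]. }
  assert (Smh : Sm J h). { intros n. unfold h. cn2. }
  assert (Smhp : Sm J hp). { intros n. unfold hp. cn2. }
  assert (Hhp : forall y, J y -> hp y = E y * a / g y).
  { intros y Hy. unfold hp. fold (E y). replace (y * (E y * q y)) with (E y * (y * w y) / g y).
    rewrite Hwy. field. auto. unfold q. field. auto. }
  assert (Hhpos : forall y, J y -> 0 < hp y).
  { intros y Hy. rewrite Hhp by auto. specialize (HJg y Hy). specialize (HEp y).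
    unfold Rdiv. rewrite Rmult_assoc. apply Rmult_lt_0_compat; auto.
    replace (a * / g y) with (a * g y * / (g y * g y)) by (field; auto).
    apply Rmult_lt_0_compat; auto. apply Rinv_0_lt_compat. specialize (Hgn y Hy). nra. }
  set (k := fun y => g y * / (a * E y)).
  set (kp := fun y => g1 y * / (a * E y) + g y * (- (a * (exp (Q y) * q y)) / (a * E y) ^ 2)).
  assert (Hk : forall y, J y -> derivable_pt_lim k y (kp y)).
  { intros y Hy. apply (derivable_pt_lim_mult g (fun y => / (a * E y))); [apply HG|].
    apply (dl_inv (fun y => a * E y)). apply (derivable_pt_lim_scal E); auto.
    specialize (HEp y). apply Rmult_integral_contrapositive; split; auto. lra. }
  assert (Smk : Sm J k). { intros n. unfold k. apply Cn_mult. apply SmG. apply Cn_inv. cn2.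
    intros y _. specialize (HEp y). apply Rmult_integral_contrapositive; split; auto. lra. }
  assert (Hkhp : forall y, J y -> k y * hp y = 1).
  { intros y Hy. rewrite Hhp by auto. unfold k. specialize (HEp y). field. split; auto. split; auto. lra. }
  set (s := r / 2).
  assert (Hs : 0 < s) by (unfold s; lra).
  set (Iu := fun y => - s < y < s).
  assert (HJs : forall y, - s <= y <= s -> J y) by (intros y Hy; unfold J, s in *; lra).
  assert (Hincr : forall x y, - s <= x -> x < y -> y <= s -> h x < h y).
  { intros x y H1 H2 H3. destruct (MVT_cor2 h hp x y H2) as [c [Hc1 Hc2]].
    { intros c Hc; apply Hh, HJs; lra. }
    assert (0 < hp c) by (apply Hhpos, HJs; lra). nra. }
  assert (Hhc : forall y, - s <= y <= s -> continuity_pt h y).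
  { intros y Hy. eapply cont_of_dlim; apply Hh, HJs; auto. }
  set (lo := h (- s)). set (hi := h s).
  assert (Hlohi : lo < hi) by (apply Hincr; lra).
  set (Gi := fun v => epsilon (inhabits 0) (fun y => - s <= y <= s /\ h y = v)).
  assert (HGi : forall v, lo <= v <= hi -> (- s <= Gi v <= s) /\ h (Gi v) = v).
  { intros v Hv. unfold Gi. apply epsilon_spec.
    destruct (f_interv_is_interv h (- s) s v) as [y Hy]; [lra|exact Hv|auto|]. exists y; auto. }
  assert (Hinj : forall y z, - s <= y <= s -> - s <= z <= s -> h y = h z -> y = z).
  { intros y z Hy Hz Hyz. destruct (Rtotal_order y z) as [H|[H|H]]; auto.
    - specialize (Hincr y z ltac:(lra) H ltac:(lra)). lra.
    - specialize (Hincr z y ltac:(lra) H ltac:(lra)). lra. }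
  assert (Hhmap : forall y, - s <= y <= s -> lo <= h y <= hi).
  { intros y Hy. unfold lo, hi. split.
    - destruct (Req_dec y (- s)) as [->|]; [lra|]. left; apply Hincr; lra.
    - destruct (Req_dec y s) as [->|]; [lra|]. left; apply Hincr; lra. }
  assert (HGih : forall y, - s <= y <= s -> Gi (h y) = y).
  { intros y Hy. destruct (HGi (h y)) as [H1 H2]; auto. }
  set (Iv := fun v => lo < v < hi).
  assert (HGiv : forall v, Iv v -> Iu (Gi v)).
  { intros v Hv. unfold Iv in Hv. destruct (HGi v) as [H1 H2]; [lra|]. unfold Iu. split.
    - destruct (Req_dec (Gi v) (- s)) as [He|]; [|lra]. rewrite He in H2. unfold lo in Hv. lra.
    - destruct (Req_dec (Gi v) s) as [He|]; [|lra]. rewrite He in H2. unfold hi in Hv. lra. }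
  assert (Hcomp : forall x, lo <= x <= hi -> comp h Gi x = id x).
  { intros x Hx. unfold comp, id. apply HGi; auto. }
  assert (HGicont : forall v, Iv v -> continuity_pt Gi v).
  { intros v Hv. apply (continuity_pt_recip_interv h Gi (- s) s); try lra; auto.
    intros x Hx1 Hx2. apply (proj1 (HGi x ltac:(unfold lo, hi; lra))). }
  assert (HGid : forall v, Iv v -> derivable_pt_lim Gi v (/ hp (Gi v))).
  { intros v Hv.
    assert (HGlo : Gi lo = - s) by (apply HGih; lra).
    assert (HGhi : Gi hi = s) by (apply HGih; lra).
    assert (Prf : forall a0, Gi lo <= a0 <= Gi hi -> derivable_pt h a0).
    { intros a0 Ha0. exists (hp a0). apply Hh, HJs. lra. }
    assert (Prg : Gi lo <= Gi v <= Gi hi).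
    { rewrite HGlo, HGhi. specialize (HGiv v Hv). unfold Iu in HGiv. lra. }
    assert (HJv : J (Gi v)) by (apply HJs; specialize (HGiv v Hv); unfold Iu in HGiv; lra).
    assert (Hdp : derive_pt h (Gi v) (Prf (Gi v) Prg) = hp (Gi v)).
    { apply derive_pt_eq_0. apply Hh; auto. }
    apply dlim_eq with (1 / derive_pt h (Gi v) (Prf (Gi v) Prg)).
    - apply (derivable_pt_lim_recip_interv h Gi lo hi v Prf); auto.
      rewrite Hdp. specialize (Hhpos _ HJv). lra.
    - rewrite Hdp. unfold Rdiv; ring. }
  assert (SmGi : Sm Iv Gi).
  { intros n. induction n as [|n IH]; simpl; auto.
    exists (fun v => / hp (Gi v)). split; auto.
    apply (Cn_comp J Iv n (fun y => / hp y) Gi); auto.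
    - apply Cn_inv; auto. intros y Hy. specialize (Hhpos y Hy). lra.
    - intros v Hv. apply HJs. specialize (HGiv v Hv). unfold Iu in HGiv. lra. }
  assert (HIuJ : forall y, Iu y -> J y) by (intros y Hy; apply HJs; unfold Iu in Hy; lra).
  assert (HIuo : openR Iu) by apply openR_int.
  assert (HIvo : openR Iv) by apply openR_int.
  assert (Ha' : forall y, a = g y + y * w y) by (intros y; rewrite Hwy; ring).
  exists (fun p => Iu (snd p)), (fun p => (fst p * k (snd p), h (snd p))).
  split; [|split].
  - split; [apply open2_snd; auto|]. split; [unfold origin, Iu; simpl; lra|].
    split; [unfold origin; simpl; f_equal; [ring|unfold h; ring]|].
    split; [split; [apply (smooth2_xy Iu k)|apply (smooth2_y Iu h)]; auto;
      apply (Sm_sub J); auto|].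
    exists (fun p => Iv (snd p)), (fun p => (fst p * hp (Gi (snd p)), Gi (snd p))).
    split; [apply open2_snd; auto|].
    split; [split; [apply (smooth2_xy Iv (fun v => hp (Gi v)))|apply (smooth2_y Iv Gi)]; auto|].
    { intros n. apply (Cn_comp J Iv n hp Gi); auto. }
    split.
    + intros [x y] Hp. simpl in *. unfold Iu in Hp.
      assert (Hy : - s <= y <= s) by lra.
      split.
      * unfold Iv. split; unfold lo, hi; apply Hincr; lra.
      * rewrite HGih by auto. f_equal. rewrite Rmult_assoc, Hkhp by (apply HJs; auto). ring.
    + intros [u v] Hq. simpl in *.
      assert (HGv := HGiv v Hq). unfold Iu in HGv.
      split; auto. f_equal.
      * rewrite Rmult_assoc, (Rmult_comm (hp _)), Hkhp by (apply HJs; lra). ring.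
      * apply HGi. unfold Iv in Hq; lra.
  - intros [x y] Hp c d Hc Hd. simpl in *. unfold has_pdx, has_pdy in *; simpl in *.
    assert (Hc0 : c = 0) by (apply (uniqueness_limite (fun _ => h y) x); auto; apply derivable_pt_lim_const).
    assert (Hd0 : d = hp y) by (apply (uniqueness_limite h y); auto; apply Hh, HIuJ; auto).
    subst c d. split; [ring|]. rewrite Rmult_assoc, Hkhp by (apply HIuJ; auto). ring.
  - intros [x y] Hp M [H11 [H12 [H21 H22]]]. simpl in *. unfold has_pdx, has_pdy in *; simpl in *.
    assert (HJy : J y) by (apply HIuJ; auto).
    assert (E11 : m11 M = k y).
    { apply (uniqueness_limite (fun t => t * k y) x); auto.
      apply (derivable_pt_lim_ext (fun t => k y * t)); [intros; ring|].
      apply dlim_eq with (k y * 1); [|ring]. apply (derivable_pt_lim_scal id), derivable_pt_lim_id. }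
    assert (E12 : m12 M = x * kp y).
    { apply (uniqueness_limite (fun t => x * k t) y); auto. apply (derivable_pt_lim_scal k); auto. }
    assert (E21 : m21 M = 0).
    { apply (uniqueness_limite (fun _ => h y) x); auto. apply derivable_pt_lim_const. }
    assert (E22 : m22 M = hp y).
    { apply (uniqueness_limite h y); auto. }
    unfold mat_apply; simpl. rewrite E11, E12, E21, E22, Hdfg, Hfy.
    assert (HEy := HEp y). assert (Hgy := Hgn y HJy). assert (Hay : g y + y * w y <> 0) by (rewrite <- Ha'; auto).
    unfold kp, k, hp, q. fold (E y). rewrite (Ha' y). unfold h. f_equal. { field. repeat split; auto; lra. } { field. auto. }
Qed.

Lemma eig_lem A l1 l2 p1 p2 : (A - l1) * p1 + l2 * p2 = 0 -> (A - l1) * p2 - l2 * p1 = 0 ->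
  (p1, p2) <> (0, 0) -> l1 = A /\ l2 = 0.
Proof.
  intros H1 H2 Hn.
  assert (E1 : ((A - l1) ^ 2 + l2 ^ 2) * p1 = 0).
  { replace (((A - l1) ^ 2 + l2 ^ 2) * p1) with ((A - l1) * ((A - l1) * p1 + l2 * p2) - l2 * ((A - l1) * p2 - l2 * p1)) by ring.
    rewrite H1, H2; ring. }
  assert (E2 : ((A - l1) ^ 2 + l2 ^ 2) * p2 = 0).
  { replace (((A - l1) ^ 2 + l2 ^ 2) * p2) with ((A - l1) * ((A - l1) * p2 - l2 * p1) + l2 * ((A - l1) * p1 + l2 * p2)) by ring.
    rewrite H1, H2; ring. }
  assert (Hs : (A - l1) ^ 2 + l2 ^ 2 = 0).
  { destruct (Req_dec p1 0) as [->|Hp1].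
    - destruct (Req_dec p2 0) as [->|Hp2]; [exfalso; apply Hn; reflexivity|].
      apply Rmult_integral in E2; destruct E2; [auto|contradiction].
    - apply Rmult_integral in E1; destruct E1; [auto|contradiction]. }
  assert (Hq1 := Rle_0_sqr (A - l1)). assert (Hq2 := Rle_0_sqr l2). unfold Rsqr in *. simpl in Hs.
  assert (Ha : (A - l1) * (A - l1) = 0) by lra.
  assert (Hb : l2 * l2 = 0) by lra.
  apply Rmult_integral in Ha. apply Rmult_integral in Hb. split; [destruct Ha; lra|destruct Hb; lra].
Qed.

Lemma eig_diag M A B : m11 M = A -> m12 M = 0 -> m21 M = 0 -> m22 M = B ->
  forall lam, eigenvalue M lam <-> lam = (A, 0) \/ lam = (B, 0).
Proof.
  intros H11 H12 H21 H22 [l1 l2]. unfold eigenvalue, Defs.Cadd, Defs.Cmul, RtoC.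
  rewrite H11, H12, H21, H22; simpl. split.
  - intros [[p1 p2] [[q1 q2] [Hn [E1 E2]]]]. simpl in *.
    injection E1 as E1a E1b. injection E2 as E2a E2b.
    destruct Hn as [Hn|Hn].
    + left. destruct (eig_lem A l1 l2 p1 p2) as [-> ->]; auto; nra.
    + right. destruct (eig_lem B l1 l2 q1 q2) as [-> ->]; auto; nra.
  - intros [H|H]; injection H as -> ->.
    + exists (1, 0), (0, 0). split; [left; intros H; injection H; lra|]. simpl. split; f_equal; ring.
    + exists (0, 0), (1, 0). split; [right; intros H; injection H; lra|]. simpl. split; f_equal; ring.
Qed.

Theorem mainTheorem6 (f df : R -> R)
  (Hf : smooth1 f) (Hdf : forall y, derivable_pt_lim f y (df y)) (Hf0 : f 0 = 0) :
  let X : R2 -> R2 := fun p => (- fst p * df (snd p), f (snd p)) in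
  (exists M, is_jacobian X origin M) /\
  (forall M, is_jacobian X origin M ->
     forall lam, eigenvalue M lam <-> lam = (- df 0, 0) \/ lam = (df 0, 0)) /\
  (hyperbolic_zero X origin <-> df 0 <> 0) /\
  (df 0 <> 0 ->
     let a := df 0 in
     exists (U : R2 -> Prop) (psi : R2 -> R2),
       diffeo_germ U psi /\
       preserves_liouville_on U psi /\
       pushforward_eq_on U psi X (fun q => (- a * fst q, a * snd q))).
Proof.
  intros X.
  assert (Hjac : is_jacobian X origin (mkMat2 (- df 0) 0 0 (df 0))).
  { unfold is_jacobian, has_pdx, has_pdy, X, origin; simpl. repeat split.
    - apply (derivable_pt_lim_ext (fun t => - df 0 * t)); [intros; ring|].
      apply dlim_eq with (- df 0 * 1); [|ring]. apply (derivable_pt_lim_scal id), derivable_pt_lim_id.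
    - apply (derivable_pt_lim_ext (fun _ => 0)); [intros; ring|]. apply derivable_pt_lim_const.
    - apply derivable_pt_lim_const.
    - apply Hdf. }
  assert (Huniq : forall M, is_jacobian X origin M ->
     m11 M = - df 0 /\ m12 M = 0 /\ m21 M = 0 /\ m22 M = df 0).
  { intros M [H1 [H2 [H3 H4]]]. destruct Hjac as [K1 [K2 [K3 K4]]]. simpl in K1, K2, K3, K4.
    repeat split; eapply uniqueness_limite; eauto. }
  assert (Heig : forall M, is_jacobian X origin M ->
     forall lam, eigenvalue M lam <-> lam = (- df 0, 0) \/ lam = (df 0, 0)).
  { intros M HM. destruct (Huniq M HM) as [H1 [H2 [H3 H4]]]. apply eig_diag; auto. }
  split; [exists (mkMat2 (- df 0) 0 0 (df 0)); exact Hjac|].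
  split; [exact Heig|].
  split.
  - split.
    + intros [_ [M [HM Hl]]]. apply (Hl (df 0, 0)). apply (Heig M HM). right; reflexivity.
    + intros Hn. split.
      * unfold X, origin; simpl. f_equal; [ring|exact Hf0].
      * exists (mkMat2 (- df 0) 0 0 (df 0)). split; [exact Hjac|].
        intros lam Hl. apply (Heig _ Hjac) in Hl. destruct Hl as [-> | ->]; unfold Cre; simpl; lra.
  - intros Hn. destruct Hf as [Df [HD0 HD]].
    apply (main_construct f df Df); auto.
Qed.
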